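(* Let $g(x,y)=\sum_{i,j=-\infty}^{\infty}c(i,j)x^iy^j$ be a nonzero bilateral formal series. Then $g\perp g$ if and only if there exist integers $m_0,k_0$ with $c(m_0,k_0)\neq0$ such that for all integers $i,j$, $$c(m_0,k_0)c(i,j)-c(m_0,i)c(k_0,j)+c(m_0,j)c(k_0,i)=0.$$
   Context: A bilateral formal series in $x,y$ is a formal expression $\sum_{i,j\in\mathbb{Z}}c(i,j)x^iy^j$ with complex coefficients. For two such series $f,g$, the expression $g(u,v)f(z,w)-g(u,w)f(z,v)+g(v,w)f(z,u)$ is a well-defined formal series in four independent variables $u,v,w,z$. One writes $f\perp g$ if this expression is identically zero. *)

(* Defs.v *)
From HB Require Import structures.
From mathcomp Require Import all_boot all_order all_algebra.
From mathcomp Require Import complex.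
From mathcomp Require Import Rstruct.
Set Implicit Arguments. Unset Strict Implicit. Unset Printing Implicit Defensive.
Import Order.TTheory GRing.Theory Num.Theory.
Local Open Scope ring_scope.

Definition CC : Type := complex Rdefinitions.R.

(* A bilateral formal series sum_{i,j in Z} c(i,j) x^i y^j, represented by its
   coefficient function c. *)
Definition bseries : Type := int -> int -> CC.

(* The coefficient of u^a v^b w^e z^d in the four-variable formal series
   g(u,v) f(z,w) - g(u,w) f(z,v) + g(v,w) f(z,u). *)
Definition perp_expr (f g : bseries) (a b e d : int) : CC :=
  g a b * f d e - g a e * f d b + g b e * f d a.

Definition perp (f g : bseries) : Prop :=
  forall a b e d : int, perp_expr f g a b e d = 0.

(* Main.v *)
Require Import Defs.
From HB Require Import structures.
From mathcomp Require Import all_boot all_order all_algebra.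
From mathcomp Require Import complex.
From mathcomp Require Import Rstruct.
From mathcomp Require Import ring.
Import Order.TTheory GRing.Theory Num.Theory.
Local Open Scope ring_scope.

Theorem lemma2p3 (g : bseries) :
  (exists i j : int, g i j != 0) ->
  (perp g g <->
   exists m0 k0 : int, g m0 k0 != 0 /\
     forall i j : int,
       g m0 k0 * g i j - g m0 i * g k0 j + g m0 j * g k0 i = 0).
Proof.
move=> [i0 [j0 Hnz]]; split.
- move=> H.
  have Hd : forall b, g b b = 0.
    move=> b; have := H j0 b b i0; rewrite /perp_expr.
    have -> : g j0 b * g i0 b - g j0 b * g i0 b + g b b * g i0 j0
              = g b b * g i0 j0 by ring.
    by move/eqP; rewrite mulf_eq0 (negbTE Hnz) orbF => /eqP.
  have As : forall a b, g a b = - g b a.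
    move=> a b; have h1 := H b a b a; have h2 := H a b a b.
    rewrite /perp_expr in h1 h2.
    have : (g a b + g b a) * (g a b + g b a) = 0.
      have -> : (g a b + g b a) * (g a b + g b a) =
        (g b a * g a b - g b b * g a a + g a b * g a b)
        + (g a b * g b a - g a a * g b b + g b a * g b a) by rewrite !Hd; ring.
      by rewrite h1 h2 addr0.
    move/eqP; rewrite mulf_eq0 orbb addr_eq0 => /eqP; done.
  exists i0, j0; split => // i j.
  have := H i0 j0 j i; rewrite /perp_expr (As i j0) (As i i0) => <-; ring.
- move=> [m0 [k0 [Hc R]]] a b e d.
  have R' : forall i j, g m0 k0 * g i j = g m0 i * g k0 j - g m0 j * g k0 i.
    move=> i j; apply/eqP; rewrite -subr_eq0; apply/eqP; rewrite -(R i j); ring.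
  apply/eqP; rewrite /perp_expr.
  set X := (X in X == 0).
  suff: g m0 k0 * g m0 k0 * X == 0 by rewrite !mulf_eq0 orbb (negbTE Hc).
  rewrite /X.
  have -> : g m0 k0 * g m0 k0 * (g a b * g d e - g a e * g d b + g b e * g d a)
    = (g m0 k0 * g a b) * (g m0 k0 * g d e) - (g m0 k0 * g a e) * (g m0 k0 * g d b)
      + (g m0 k0 * g b e) * (g m0 k0 * g d a) by ring.
  rewrite (R' a b) (R' d e) (R' a e) (R' d b) (R' b e) (R' d a); apply/eqP; ring.
Qed.
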